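(* Let $(A,f)$ be a finite-dimensional quadratic Lie algebra over a field $\mathbb{K}$ of characteristic zero, let $d$ be an $f$-skew-symmetric derivation of $A$, and let $(A_b,f_b)$ be the one-dimensional double extension of $(A,f)$ by $(b,d)$. Then $Z(A_b)=(Z(A)\cap\ker d)\oplus \mathbb{K}\beta$ if and only if $d$ is not an inner derivation of $A$. Otherwise $d=\mathrm{ad}\,x$ for some $x\in A$ and $Z(A_b)=(Z(A)\cap\ker d)\oplus\mathbb{K}\beta\oplus\mathbb{K}(b-x)$.
   Context: A quadratic Lie algebra $(A,f)$ is a Lie algebra with a non-degenerate symmetric bilinear form $f$ satisfying $f([x,y],z)+f(y,[x,z])=0$. A derivation $d$ is $f$-skew-symmetric if $f(d(x),y)+f(x,d(y))=0$ for all $x,y$. The one-dimensional double extension of $(A,f)$ by $(b,d)$ is the vector space $A_b=\mathbb{K}b\oplus A\oplus\mathbb{K}\beta$ with bracket $[\lambda b+a+\mu\beta,\lambda' b+a'+\mu'\beta]=\lambda d(a')-\lambda' d(a)+[a,a']_A+f(d(a),a')\beta$ ($\lambda,\lambda',\mu,\mu'\in\mathbb{K}$, $a,a'\in A$) and symmetric form $f_b(\lambda b+a+\mu\beta,\lambda' b+a'+\mu'\beta)=\lambda\mu'+\lambda'\mu+f(a,a')$. $Z(\cdot)$ denotes the centre. *)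

(* Defs.v *)
From mathcomp Require Import all_boot all_order all_algebra.
Set Implicit Arguments. Unset Strict Implicit. Unset Printing Implicit Defensive.
Import GRing.Theory.
Local Open Scope ring_scope.

Section LieDefs.
Variables (K : fieldType) (A : vectType K).

Definition bracket_bilinear (br : A -> A -> A) : Prop :=
  (forall (c : K) (x y z : A), br (c *: x + y) z = c *: br x z + br y z) /\
  (forall (c : K) (x y z : A), br z (c *: x + y) = c *: br z x + br z y).

Definition is_lie_algebra (br : A -> A -> A) : Prop :=
  [/\ bracket_bilinear br,
      (forall x, br x x = 0) &
      (forall x y z, br x (br y z) + br y (br z x) + br z (br x y) = 0)].

Definition form_bilinear (f : A -> A -> K) : Prop :=
  (forall (c : K) (x y z : A), f (c *: x + y) z = c * f x z + f y z) /\
  (forall (c : K) (x y z : A), f z (c *: x + y) = c * f z x + f z y).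

Definition is_quadratic_form (br : A -> A -> A) (f : A -> A -> K) : Prop :=
  [/\ form_bilinear f,
      (forall x y, f x y = f y x),
      (forall x, (forall y, f x y = 0) -> x = 0) &
      (forall x y z, f (br x y) z + f y (br x z) = 0)].

Definition is_linear_map (d : A -> A) : Prop :=
  forall (c : K) (x y : A), d (c *: x + y) = c *: d x + d y.

Definition is_derivation (br : A -> A -> A) (d : A -> A) : Prop :=
  is_linear_map d /\ (forall x y, d (br x y) = br (d x) y + br x (d y)).

Definition f_skew (f : A -> A -> K) (d : A -> A) : Prop :=
  forall x y, f (d x) y + f x (d y) = 0.

Definition is_inner (br : A -> A -> A) (d : A -> A) : Prop :=
  exists x : A, forall y, d y = br x y.

Definition centre (T : Type) (z0 : T) (br : T -> T -> T) (z : T) : Prop :=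
  forall y, br z y = z0.

(* One-dimensional double extension A_b = K b (+) A (+) K beta,
   an element lambda b + a + mu beta is encoded as (lambda, a, mu). *)
Definition dext_bracket (br : A -> A -> A) (f : A -> A -> K) (d : A -> A)
  (u v : K * A * K) : K * A * K :=
  let: (l, a, _) := u in
  let: (l', a', _) := v in
  (0, l *: d a' - l' *: d a + br a a', f (d a) a').

Definition dext_form (f : A -> A -> K) (u v : K * A * K) : K :=
  let: (l, a, m) := u in
  let: (l', a', m') := v in
  l * m' + l' * m + f a a'.

End LieDefs.

(* Main.v *)
Require Import Defs.
From mathcomp Require Import all_boot all_order all_algebra.
Import GRing.Theory.
Local Open Scope ring_scope.

Section H.
Variables (K : fieldType) (A : vectType K).

Lemma lin0 (g : A -> A) : (forall c x y, g (c *: x + y) = c *: g x + g y) -> g 0 = 0.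
Proof. move=> H; have E := H 1 0 0; rewrite scaler0 addr0 scale1r in E.
by apply: (addrI (g 0)); rewrite addr0 -E. Qed.

Lemma linZ (g : A -> A) : (forall c x y, g (c *: x + y) = c *: g x + g y) ->
  forall c x, g (c *: x) = c *: g x.
Proof. move=> H c x; have := H c x 0; rewrite !addr0 (lin0 _ H) addr0 //. Qed.

Lemma linD (g : A -> A) : (forall c x y, g (c *: x + y) = c *: g x + g y) ->
  forall x y, g (x + y) = g x + g y.
Proof. move=> H x y; have := H 1 x y; rewrite !scale1r //. Qed.

Lemma centreE (br : A -> A -> A) (f : A -> A -> K) (d : A -> A) l a m :
  is_lie_algebra br -> is_quadratic_form br f -> is_derivation br d ->
  centre (0 : K * A * K) (dext_bracket br f d) (l, a, m) <->
  (d a = 0 /\ forall y, l *: d y + br a y = 0).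
Proof.
case=> [[Bl Br] _ _] [[Fl Fr] _ _ _] [Dl _].
have f0 : forall z, f 0 z = 0.
  move=> z; have E := Fl 1 0 0 z; rewrite scaler0 addr0 mul1r in E.
  by apply: (addrI (f 0 z)); rewrite addr0 -E.
have b0 : br a 0 = 0 by apply: (lin0 (br a) (fun c x y => Br c x y a)).
have d0 : d 0 = 0 by apply: lin0.
split.
- move=> H.
  have := H (1, 0, 0); rewrite /dext_bracket => -[]; rewrite d0 b0 scaler0 scale1r.
  rewrite sub0r addr0 => /eqP; rewrite oppr_eq0 => /eqP da _.
  split => // y; have := H (0, y, 0); rewrite /dext_bracket => -[].
  by rewrite scale0r subr0.
- move=> [da Hy] [[l' a'] m'] /=; rewrite da scaler0 subr0 Hy f0 //.
Qed.
End H.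

Theorem lemma2p8 (K : fieldType) (A : vectType K)
  (br : A -> A -> A) (f : A -> A -> K) (d : A -> A) :
  [pchar K] =i pred0 ->
  is_lie_algebra br ->
  is_quadratic_form br f ->
  is_derivation br d ->
  f_skew f d ->
  ((forall z : K * A * K,
      centre (0 : K * A * K) (dext_bracket br f d) z <->
      exists (a : A) (mu : K),
        [/\ centre 0 br a, d a = 0 & z = (0, a, mu)])
   <-> ~ is_inner br d)
  /\
  (is_inner br d ->
   forall x : A, (forall y, d y = br x y) ->
   forall z : K * A * K,
     centre (0 : K * A * K) (dext_bracket br f d) z <->
     exists (a : A) (mu lam : K),
       [/\ centre 0 br a, d a = 0 & z = (lam, a - lam *: x, mu)]).
Proof.
move=> _ HL HQ HD _.
have CE := fun l a m => @centreE K A br f d l a m HL HQ HD.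
have [[Bl Br] Bxx _] := HL.
have [Dl _] := HD.
have BZl : forall c x y, br (c *: x) y = c *: br x y.
  by move=> c x y; exact: (@linZ K A (fun t => br t y) (fun c x z => Bl c x z y) c x).
have BDl : forall x x' y, br (x + x') y = br x y + br x' y.
  by move=> x x' y; exact: (@linD K A (fun t => br t y) (fun c x z => Bl c x z y) x x').
have DZ := @linZ K A _ Dl; have DD := @linD K A _ Dl.
split.
- split.
  + move=> H [x Hx].
    have : centre 0 (dext_bracket br f d) (1, - x, 0).
      apply/CE; split.
        by rewrite -scaleN1r DZ Hx Bxx scaler0.
      by move=> y; rewrite scale1r Hx -scaleN1r BZl scaleN1r subrr.
    move/H => [a [mu [_ _ []]]] /eqP; by rewrite oner_eq0.
  + move=> NI [[l a] m]; split=> [/CE|HH]; last (apply/CE; move: HH).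
    * move=> [da Hy]; have [l0|lnz] := eqVneq l 0.
        exists a, m; split => //; last by rewrite l0.
        by move=> y; have := Hy y; rewrite l0 scale0r add0r.
      exfalso; apply: NI; exists (- l^-1 *: a) => y.
      rewrite BZl; apply: (@scalerI _ _ l) => //.
      rewrite scalerA mulrN mulfV // scaleN1r; apply/eqP.
      by rewrite -subr_eq0 opprK Hy.
    * move=> [a0 [mu [ca da []]]] -> -> _; split => // y.
      by rewrite scale0r add0r ca.
- move=> _ x Hx [[l a] m]; split=> [/CE|HH]; last (apply/CE; move: HH).
  + move=> [da Hy]; exists (a + l *: x), m, l; split.
    * by move=> y; rewrite BDl BZl -Hx addrC Hy.
    * by rewrite DD da DZ Hx Bxx scaler0 addr0.
    * by rewrite addrK.
  + move=> [a0 [mu [lam [ca da []]]]] -> -> _; split.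
      by rewrite DD da -scaleN1r DZ DZ Hx Bxx !scaler0 addr0.
    move=> y; rewrite BDl ca add0r -scaleN1r BZl BZl -Hx scalerA mulN1r.
    by rewrite scaleNr subrr.
Qed.
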